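(* Let $k\ge3$ be odd and let $G$ be a connected $k$-uniform hypergraph (with at least one edge). Then $0$ is not an H-eigenvalue of the signless Laplacian tensor $\mathcal D+\mathcal A$, i.e. there is no nonzero $\mathbf x\in\mathbb R^n$ with $(\mathcal D+\mathcal A)\mathbf x^{k-1}=0$.
   Context: A $k$-uniform hypergraph $G=(V,E)$ has vertex set $V=[n]$ ($n\ge k$) and edge set $E$ of $k$-element subsets; $E_i=\{e\in E:i\in e\}$, $d_i=|E_i|$. $G$ is connected if any two distinct vertices are joined by a chain of edges with consecutive edges intersecting. $\mathcal A$: $a_{i_1\dots i_k}=\frac1{(k-1)!}$ if $\{i_1,\dots,i_k\}\in E$, else $0$; $\mathcal D$ diagonal with $d_{i\dots i}=d_i$; so $((\mathcal D+\mathcal A)\mathbf x^{k-1})_i=d_ix_i^{k-1}+\sum_{e\in E_i}\prod_{j\in e\setminus\{i\}}x_j$. An H-eigenvalue is an eigenvalue possessing a real eigenvector. *)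

(* Defs.v *)
From HB Require Import structures.
From mathcomp Require Import all_boot all_order all_algebra.
Set Implicit Arguments. Unset Strict Implicit. Unset Printing Implicit Defensive.
Import Order.TTheory GRing.Theory Num.Theory.
Local Open Scope ring_scope.

Definition k_uniform (n k : nat) (E : {set {set 'I_n}}) : Prop :=
  forall e, e \in E -> #|e| = k.

Definition edges_at (n : nat) (E : {set {set 'I_n}}) (i : 'I_n) : {set {set 'I_n}} :=
  [set e in E | i \in e].
Definition degree (n : nat) (E : {set {set 'I_n}}) (i : 'I_n) : nat :=
  #|edges_at E i|.

Definition hconnected (n : nat) (E : {set {set 'I_n}}) : Prop :=
  forall i j : 'I_n, i != j ->
    exists (e1 : {set 'I_n}) (s : seq {set 'I_n}),
      [/\ all (fun e => e \in E) (e1 :: s),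
          i \in e1, j \in last e1 s &
          path (fun a b => a :&: b != set0) e1 s].

(* ((D + A) x^{k-1})_i = d_i x_i^{k-1} + sum_{e in E_i} prod_{j in e \ {i}} x_j *)
Definition signless_laplacian_apply (R : numDomainType) (n k : nat)
    (E : {set {set 'I_n}}) (x : 'I_n -> R) (i : 'I_n) : R :=
  (degree E i)%:R * x i ^+ (k.-1)
  + \sum_(e in edges_at E i) \prod_(j in e :\ i) x j.

Definition is_H_eigenvalue_signless_laplacian (R : numDomainType) (n k : nat)
    (E : {set {set 'I_n}}) (lam : R) : Prop :=
  exists x : 'I_n -> R, (exists i, x i != 0) /\
    forall i, signless_laplacian_apply k E x i = lam * x i ^+ (k.-1).

(* Main.v *)
Require Import Defs.
From HB Require Import structures.
From mathcomp Require Import all_boot all_order all_algebra.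
Import Order.TTheory GRing.Theory Num.Theory.
Local Open Scope ring_scope.

Lemma evenpow (R : realDomainType) (k : nat) (x : R) :
  odd k -> x ^+ k.-1 = `|x| ^+ k.-1.
Proof.
move=> ko; rewrite -normrX ger0_norm // exprn_even_ge0 //.
by case: k ko => //= k; rewrite negbK.
Qed.

Lemma prod_eq_max (R : realDomainType) (I : finType) (A : {set I})
  (a : I -> R) (m : R) : 0 < m -> (forall j, j \in A -> 0 <= a j <= m) ->
  \prod_(j in A) a j = m ^+ #|A| -> forall j, j \in A -> a j = m.
Proof.
move=> m0 ha hp j jA; apply/eqP; rewrite eq_le (andP (ha j jA)).2 /=.
rewrite leNgt; apply/negP => lt.
have M0 : 0 < \prod_(i in A :\ j) m by apply: prodr_gt0.
have : \prod_(i in A) a i < \prod_(i in A) m.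
  rewrite (big_setD1 j jA) [X in _ < X](big_setD1 j jA) /=.
  apply: (le_lt_trans (y := a j * \prod_(i in A :\ j) m)).
    apply: ler_wpM2l; first by case/andP: (ha j jA).
    apply: ler_prod => i; rewrite in_setD1 => /andP [_ iA]; exact: ha.
  by rewrite ltr_pM2r.
by rewrite hp prodr_const ltxx.
Qed.

Theorem proposition5p4 (R : realFieldType) (n k : nat) (E : {set {set 'I_n}}) :
  (3 <= k)%N -> odd k -> (k <= n)%N ->
  k_uniform k E -> hconnected E -> E != set0 ->
  ~ is_H_eigenvalue_signless_laplacian (R := R) k E 0.
Proof.
move=> k3 ko kn ku hc E0 [x [[i0 xi0] hx]].
case: (@arg_maxP _ R _ i0 xpredT (fun j => `|x j|) isT) => i _ imax.
set m := `|x i|.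
have m0 : 0 < m.
  apply: (lt_le_trans (y := `|x i0|)); first by rewrite normr_gt0.
  exact: (imax i0 isT).
have cardD : forall e p, e \in E -> p \in e -> #|e :\ p| = k.-1.
  move=> e p eE pe; move: (cardsD1 p e); rewrite pe (ku e eE) add1n => -> //.
have key : forall p, `|x p| = m -> forall e, e \in edges_at E p ->
    \prod_(j in e :\ p) x j = - m ^+ k.-1.
  move=> p hp e he.
  have hs := hx p; rewrite /signless_laplacian_apply mul0r evenpow // hp in hs.
  have : \sum_(e in edges_at E p) (\prod_(j in e :\ p) x j + m ^+ k.-1) = 0.
    by rewrite big_split /= sumr_const -mulr_natl addrC.
  move/psumr_eq0P => h.
  apply/eqP; rewrite -addr_eq0; apply/eqP; apply: h => // e' he'.
  move: he'; rewrite inE => /andP [e'E pe'].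
  rewrite -lerBlDr sub0r.
  have : `|\prod_(j in e' :\ p) x j| <= m ^+ k.-1.
    rewrite normr_prod -(cardD e' p e'E pe') -prodr_const.
    apply: ler_prod => j _; rewrite normr_ge0 /=; exact: (imax j isT).
  by rewrite ler_norml => /andP [].
have [j ji] : exists j : 'I_n, j != i.
  have h0 : (0 < n)%N by apply: leq_trans kn; apply: leq_trans k3.
  have h1 : (1 < n)%N by apply: leq_trans kn; apply: leq_trans k3.
  case: (eqVneq i (Ordinal h0)) => [->|ne].
    by exists (Ordinal h1); apply/eqP => /(congr1 val).
  by exists (Ordinal h0); rewrite eq_sym.
have [e [s [/= /andP [eE _] ie _ _]]] := hc i j (negbT (introF eqP (fun h => (elimN eqP ji) (esym h)))).
have ie' : e \in edges_at E i by rewrite inE eE ie.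
have allm : forall l, l \in e -> `|x l| = m.
  move=> l le; case: (eqVneq l i) => [->//|li].
  apply: (@prod_eq_max R _ (e :\ i) (fun l => `|x l|) m m0).
  - by move=> l' _; rewrite normr_ge0 /=; exact: (imax l' isT).
  - by rewrite -normr_prod key // normrN (cardD e i eE ie) normrX ger0_norm // ltW.
  - by rewrite in_setD1 li le.
have P_eq : forall l, l \in e -> \prod_(l' in e) x l' = - (x l * m ^+ k.-1).
  move=> l le; rewrite (big_setD1 l le) /= key ?mulrN //; first exact: allm.
  by rewrite inE eE le.
have Mn0 : m ^+ k.-1 != 0 by rewrite expf_neq0 // gt_eqF.
have xc : forall l, l \in e -> x l = x i.
  move=> l le; apply: (mulIf Mn0); apply: oppr_inj.
  by rewrite -P_eq // -P_eq.
have : \prod_(l' in e) x l' = x i ^+ k.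
  by rewrite (eq_bigr (fun _ => x i)) ?prodr_const ?(ku e eE) // => l' /xc.
rewrite (P_eq i ie).
have -> : x i ^+ k = x i * m ^+ k.-1.
  by rewrite -evenpow // -exprS prednK // (leq_trans _ k3).
move/eqP; rewrite eq_sym -subr_eq0 opprK -mulr2n mulrn_eq0 /= mulf_eq0 (negbTE Mn0) orbF.
by move/eqP => xi; move: m0; rewrite /m xi normr0 ltxx.
Qed.
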